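(* Let $k$ be an algebraically closed field of characteristic zero. Let $Y=\operatorname{Spec} B$, $T=\operatorname{Spec} R$ be irreducible affine $k$-varieties, $f:Y\to T$ a dominant morphism with irreducible and reduced general fibers, $R\subset B$ via $f^*$, and $D$ an $R$-trivial derivation of $B$ such that for every closed point $t\in T$ (maximal ideal $\mathfrak m$) the induced derivation of $B\otimes_R R/\mathfrak m$ is locally nilpotent. Suppose $k_0\subset k$ is a subfield finitely generated over $\mathbb Q$, and $Y_0=\operatorname{Spec}B_0$, $T_0=\operatorname{Spec}R_0$ are geometrically integral affine $k_0$-varieties with a dominant morphism $f_0:Y_0\to T_0$ and an $R_0$-trivial derivation $D_0$ of $B_0$ such that $Y=Y_0\otimes_{k_0}k$, $T=T_0\otimes_{k_0}k$, $f=f_0\otimes_{k_0}k$, $D=D_0\otimes_{k_0}k$. Let $k_1$ be the algebraic closure of $k_0$ in $k$, and put $B_1=B_0\otimes_{k_0}k_1$, $R_1=R_0\otimes_{k_0}k_1$, $Y_1=\operatorname{Spec}B_1$, $T_1=\operatorname{Spec}R_1$, $f_1=f_0\otimes_{k_0}k_1$, $D_1=D_0\otimes_{k_0}k_1$. Then: (1) for every closed point $t_1$ of $T_1$, the restriction of $D_1$ to the fiber $f_1^{-1}(t_1)$ (i.e. the induced derivation of $B_1\otimes_{R_1}R_1/\mathfrak m_1$, $\mathfrak m_1$ the maximal ideal of $t_1$) is locally nilpotent; (2) $D_1$ is locally nilpotent if and only if $D$ is locally nilpotent.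
   Context: A derivation $\delta$ of a ring $A$ is locally nilpotent if for every $a\in A$ some power $\delta^n(a)=0$. An $R$-trivial derivation is one vanishing on $R$. *)

(* Defs.v *)
From mathcomp Require Import all_boot all_algebra.
From mathcomp Require Import mpoly.
Set Implicit Arguments. Unset Strict Implicit. Unset Printing Implicit Defensive.
Import GRing.Theory.
Local Open Scope ring_scope.

(* Affine varieties are given by presentations: Y0 = Spec k0[x_1..x_n]/I0,
   T0 = Spec k0[t_1..t_m]/J0, all polynomials seen inside k[x] (resp. k[t]).
   Base change to a subfield S (k0 <= S <= k) is the quotient of S[x] by the
   ideal generated by the same generators. *)

Section Defs.
Variable k : fieldType.

Definition is_subfield (S : k -> Prop) : Prop :=
  [/\ S 0, S 1,
      forall x y, S x -> S y -> S (x - y),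
      forall x y, S x -> S y -> S (x * y)
    & forall x, S x -> x != 0 -> S x^-1].

Definition fg_subfield (S : k -> Prop) : Prop :=
  exists s : seq k, forall x,
    S x <-> (forall S', is_subfield S' -> (forall y, y \in s -> S' y) -> S' x).

Definition alg_closure_in (S : k -> Prop) (x : k) : Prop :=
  exists p : {poly k}, [/\ p != 0, forall i, S p`_i & root p x].

Definition mOver n (S : k -> Prop) (p : {mpoly k[n]}) : Prop :=
  forall mm, S (p@_mm).

Definition in_ideal n (S : k -> Prop) (gens : seq {mpoly k[n]})
    (p : {mpoly k[n]}) : Prop :=
  exists cs : seq {mpoly k[n]},
    [/\ size cs = size gens, forall c, c \in cs -> mOver S c
      & p = \sum_(i < size gens) cs`_i * gens`_i].

Definition prime_over n (S : k -> Prop) (gens : seq {mpoly k[n]}) : Prop :=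
  ~ in_ideal S gens 1 /\
  forall p q, mOver S p -> mOver S q -> in_ideal S gens (p * q) ->
    in_ideal S gens p \/ in_ideal S gens q.

Definition der n (d : n.-tuple {mpoly k[n]}) (p : {mpoly k[n]}) : {mpoly k[n]} :=
  \sum_(i < n) tnth d i * mderiv i p.

Definition lnd_over n (S : k -> Prop) (d : n.-tuple {mpoly k[n]})
    (gens : seq {mpoly k[n]}) : Prop :=
  forall p, mOver S p -> exists N, in_ideal S gens (iter N (der d) p).

Definition fiber_gens n m (gens : seq {mpoly k[n]})
    (phi : m.-tuple {mpoly k[n]}) (a : 'I_m -> k) : seq {mpoly k[n]} :=
  gens ++ [seq tnth phi j - (a j)%:MP | j <- enum 'I_m].

Definition point_over m (S : k -> Prop) (J : seq {mpoly k[m]}) (a : 'I_m -> k)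
  : Prop := (forall j, S (a j)) /\ (forall g, g \in J -> g.@[a] = 0).

(* f^* : S[t]/J -> S[x]/I, t_j |-> phi_j, is injective (f dominant) *)
Definition dominant_over n m (S : k -> Prop) (I : seq {mpoly k[n]})
    (J : seq {mpoly k[m]}) (phi : m.-tuple {mpoly k[n]}) : Prop :=
  forall r : {mpoly k[m]}, mOver S r -> in_ideal S I (comp_mpoly phi r) ->
    in_ideal S J r.

End Defs.

(* Main.v *)
From HB Require Import structures.
Require Import Defs.
From mathcomp Require Import all_boot all_algebra.
From mathcomp Require Import mpoly.
From mathcomp Require Import ring.
From Stdlib Require Import ClassicalEpsilon.
Set Implicit Arguments. Unset Strict Implicit. Unset Printing Implicit Defensive.
Import GRing.Theory.
Local Open Scope ring_scope.


Section SubF.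
Variables (F : fieldType) (S : divringClosed F).
Inductive BB := mkBB x & x \in S.
Definition vBB u := let: mkBB x _ := u in x.
HB.instance Definition _ := [isSub for vBB].
HB.instance Definition _ := [Choice of BB by <:].
HB.instance Definition _ := [SubChoice_isSubComUnitRing of BB by <:].
HB.instance Definition _ := [SubComUnitRing_isSubIntegralDomain of BB by <:].
HB.instance Definition _ := [SubIntegralDomain_isSubField of BB by <:].

Lemma lin_descent_mx m1 nc (A : 'M[F]_(m1, nc)) (b : 'rV[F]_nc) :
  (forall i j, A i j \in S) -> (forall j, b 0 j \in S) ->
  (b <= A)%MS ->
  exists u : 'rV[F]_m1, (forall j, u 0 j \in S) /\ u *m A = b.
Proof.
move=> AS bS sub.
pose A' := \matrix_(i, j) (Sub (A i j) (AS i j) : BB).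
pose b' := \row_j (Sub (b 0 j) (bS j) : BB).
have eA : map_mx val A' = A by apply/matrixP=> i j; rewrite !mxE SubK.
have eb : map_mx val b' = b by apply/matrixP=> i j; rewrite !mxE ord1 SubK.
move: sub; rewrite -eA -eb map_submx => /submxP[u' ->].
exists (map_mx val u'); split; first by move=> j; rewrite mxE; apply: valP.
by rewrite map_mxM.
Qed.

Lemma eig_alg N (A : 'M[F]_N) (v : 'rV[F]_N) z :
  (forall i j, A i j \in S) -> v != 0 -> v *m A = z *: v ->
  exists p : {poly F}, [/\ p != 0, forall i, p`_i \in S & root p z].
Proof.
move=> AS v0 vA.
pose A' := \matrix_(i, j) (Sub (A i j) (AS i j) : BB).
have eA : map_mx val A' = A by apply/matrixP=> i j; rewrite !mxE SubK.
exists (map_poly val (char_poly A')); split.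
- by rewrite map_poly_eq0 monic_neq0 // char_poly_monic.
- by move=> i; rewrite coef_map /=; apply: valP.
rewrite map_char_poly eA -eigenvalue_root_char; apply/eigenvalueP; by exists v.
Qed.
End SubF.

Section PropSub.
Variables (F : fieldType) (P : F -> Prop) (HP : is_subfield P).

Lemma P0 : P 0. Proof. by case: HP. Qed.
Lemma P1 : P 1. Proof. by case: HP. Qed.
Lemma PB x y : P x -> P y -> P (x - y). Proof. by case: HP => _ _ h _ _; apply: h. Qed.
Lemma PM x y : P x -> P y -> P (x * y). Proof. by case: HP => _ _ _ h _; apply: h. Qed.
Lemma PN x : P x -> P (- x). Proof. by move=> h; rewrite -sub0r; apply: PB => //; apply: P0. Qed.
Lemma PD x y : P x -> P y -> P (x + y).
Proof. by move=> hx hy; rewrite -[y]opprK; apply: PB => //; apply: PN. Qed.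
Lemma PV x : P x -> P x^-1.
Proof.
move=> Px; case: (eqVneq x 0) => [->|nz]; first by rewrite invr0; apply: P0.
by case: HP => _ _ _ _ h; apply: h.
Qed.
Lemma Psum (I : Type) (r : seq I) (Q : pred I) (G : I -> F) :
  (forall i, P (G i)) -> P (\sum_(i <- r | Q i) G i).
Proof.
move=> h; elim: r => [|a r IH]; first by rewrite big_nil; apply: P0.
rewrite big_cons; case: (Q a) => //; exact: PD.
Qed.
Lemma Pnat m : P m%:R.
Proof.
elim: m => [|m IH]; first exact: P0.
by rewrite -addn1 natrD; apply: PD => //; apply: P1.
Qed.

Definition Pb : {pred F} :=
  fun x => if excluded_middle_informative (P x) then true else false.
Lemma PbP x : (x \in Pb) <-> P x.
Proof.
rewrite /Pb unfold_in; case: excluded_middle_informative => //.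
Qed.
Lemma Pb_closed : divring_closed Pb.
Proof.
split; first by apply/PbP; apply: P1.
  by move=> x y /PbP hx /PbP hy; apply/PbP; apply: PB.
by move=> x y /PbP hx /PbP hy; apply/PbP; apply: PM => //; apply: PV.
Qed.
HB.instance Definition _ := GRing.isDivringClosed.Build F Pb Pb_closed.

Lemma lin_descentT (T1 T2 : finType) (a : T1 -> T2 -> F) (b : T2 -> F) :
  (forall i j, P (a i j)) -> (forall j, P (b j)) ->
  (exists u : T1 -> F, forall j, \sum_i u i * a i j = b j) ->
  exists u : T1 -> F, (forall i, P (u i)) /\ forall j, \sum_i u i * a i j = b j.
Proof.
move=> aP bP [u hu].
pose A := \matrix_(i < #|T1|, j < #|T2|) a (enum_val i) (enum_val j).
pose b' := \row_(j < #|T2|) b (enum_val j).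
have sub : (b' <= A)%MS.
  apply/submxP; exists (\row_i u (enum_val i)); apply/matrixP=> i j.
  rewrite !mxE -hu (big_enum_val (A := predT) (fun x => u x * a x (enum_val j))).
  by apply: eq_bigr => l _; rewrite !mxE.
have hA : forall i j, A i j \in Pb by move=> i j; apply/PbP; rewrite mxE; apply: aP.
have hb : forall j, b' 0 j \in Pb by move=> j; apply/PbP; rewrite mxE; apply: bP.
have [w [wP ew]] := @lin_descent_mx F Pb _ _ A b' hA hb sub.
exists (fun x => w 0 (enum_rank x)); split; first by move=> i; apply/PbP.
move=> j; move: ew => /matrixP/(_ 0 (enum_rank j)).
rewrite !mxE enum_rankK => <-.
rewrite (big_enum_val (A := predT) (fun x => w 0 (enum_rank x) * a x j)).
by apply: eq_bigr => l _; rewrite !mxE enum_valK enum_rankK.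
Qed.

Lemma alg_module (T : finType) (v : T -> F) (a : T -> T -> F) z :
  (forall i j, P (a i j)) -> (exists t, v t != 0) ->
  (forall j, z * v j = \sum_i v i * a i j) -> alg_closure_in P z.
Proof.
move=> aP [t vt] hz.
pose A := \matrix_(i < #|T|, j < #|T|) a (enum_val i) (enum_val j).
pose v' := \row_(j < #|T|) v (enum_val j).
have v0 : v' != 0.
  apply/eqP => /matrixP/(_ 0 (enum_rank t)); rewrite !mxE enum_rankK.
  by move/eqP; rewrite (negbTE vt).
have hA : v' *m A = z *: v'.
  apply/matrixP=> i j; rewrite !mxE hz.
  rewrite (big_enum_val (A := predT) (fun x => v x * a x (enum_val j))).
  by apply: eq_bigr => l _; rewrite !mxE.
have hA' : forall i j, A i j \in Pb by move=> i j; apply/PbP; rewrite mxE; apply: aP.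
have [p [p0 pS rp]] := @eig_alg F Pb _ A v' z hA' v0 hA.
by exists p; split => // i; apply/PbP.
Qed.

End PropSub.


Section Alg.
Variables (F : fieldType) (P : F -> Prop) (HP : is_subfield P).

Lemma sum_delta r (G : 'I_r -> F) (k : 'I_r) :
  \sum_(j < r) G j * (j == k)%:R = G k.
Proof.
rewrite (bigD1 k) //= eqxx mulr1 big1 ?addr0 // => j /negbTE ->.
by rewrite mulr0.
Qed.

Lemma sum_pair r s (G : 'I_r * 'I_s -> F) :
  \sum_(ij : 'I_r * 'I_s) G ij = \sum_(i < r) \sum_(j < s) G (i, j).
Proof. by rewrite pair_big /=; apply: eq_big => // -[i j]. Qed.

Lemma alg_base c : P c -> alg_closure_in P c.
Proof.
move=> Pc; exists ('X - c%:P); split.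
- by rewrite polyXsubC_eq0.
- move=> i; rewrite coefB coefX coefC.
  case: i => [|[|i]] /=; rewrite ?sub0r ?subr0 ?oppr0.
  + by apply: (PN HP).
  + exact: (P1 HP).
  + exact: (P0 HP).
- by rewrite root_XsubC.
Qed.

Lemma alg_basis x : alg_closure_in P x ->
  exists r (c : 'I_r -> 'I_r -> F), [/\ (0 < r)%N, forall i j, P (c i j) &
    forall i : 'I_r, x ^+ i.+1 = \sum_(j < r) c i j * x ^+ j].
Proof.
case=> p [p0 pc rp].
have sz : (1 < size p)%N.
  rewrite ltnNge; apply/negP => /size1_polyC pE.
  move: rp p0; rewrite pE rootC => /eqP ->; by rewrite eqxx.
set r := (size p).-1.
have eN : size p = r.+1 by rewrite /r prednK // ltnW.
set l := p`_r.
have l0 : l != 0.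
  by rewrite /l /r -lead_coefE lead_coef_eq0.
have e : l * x ^+ r = - \sum_(j < r) p`_j * x ^+ j.
  move: rp => /rootP; rewrite horner_coef eN big_ord_recr /= => /eqP.
  by rewrite addrC addr_eq0 => /eqP.
exists r, (fun i j => if (i.+1 < r)%N then ((j : nat) == i.+1)%:R else - (p`_j / l)).
split.
- by rewrite /r -ltnS -eN.
- move=> i j; case: ifP => _.
  + by case: (_ == _); [apply: (P1 HP) | apply: (P0 HP)].
  + by apply: (PN HP); apply: (PM HP); [apply: pc | apply: (PV HP); apply: pc].
move=> i; have [hi|hi] := boolP (i.+1 < r)%N.
- rewrite /=.
  rewrite (bigD1 (Ordinal hi)) //= eqxx mul1r big1 ?addr0 // => j hj.
  rewrite (_ : ((j : nat) == i.+1) = false) ?mul0r //.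
  apply/negbTE; apply: contra hj => /eqP ej; apply/eqP/val_inj => /=.
  exact: ej.
- transitivity (\sum_(j < r) - (p`_j / l) * x ^+ j); last first.
    by apply: eq_bigr => j _.
  have ei : i.+1 = r by apply/eqP; rewrite eqn_leq ltn_ord leqNgt.
  rewrite ei -[x ^+ r](mulKf l0) e mulrN -mulNr mulr_sumr.
  by apply: eq_bigr => j _; rewrite mulrA mulNr [l^-1 * _]mulrC.
Qed.

Lemma alg_add x y : alg_closure_in P x -> alg_closure_in P y ->
  alg_closure_in P (x + y).
Proof.
move=> /alg_basis [r [c [r0 cP ec]]] /alg_basis [s [d [s0 dP ed]]].
pose v := fun ij : 'I_r * 'I_s => x ^+ ij.1 * y ^+ ij.2.
pose a := fun (ij kl : 'I_r * 'I_s) =>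
  c kl.1 ij.1 * (ij.2 == kl.2)%:R + (ij.1 == kl.1)%:R * d kl.2 ij.2.
apply: (@alg_module F P HP _ v a).
- move=> ij kl; apply: (PD HP); apply: (PM HP) => //;
    by case: (_ == _); [apply: (P1 HP) | apply: (P0 HP)].
- exists (Ordinal r0, Ordinal s0); by rewrite /v /= !expr0 mulr1 oner_neq0.
move=> [k l]; rewrite sum_pair.
under eq_bigr do under eq_bigr do rewrite /v /a /= mulrDr.
under eq_bigr do rewrite big_split.
rewrite big_split.
have h1 : \sum_(i < r) \sum_(j < s) x ^+ i * y ^+ j * (c k i * (j == l)%:R)
    = \sum_(i < r) c k i * x ^+ i * y ^+ l.
  apply: eq_bigr => i _.
  rewrite (eq_bigr (fun j : 'I_s => (x ^+ i * y ^+ j * c k i) * (j == l)%:R)).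
    by rewrite sum_delta; ring.
  by move=> j _; rewrite mulrA.
have h2 : \sum_(i < r) \sum_(j < s) x ^+ i * y ^+ j * ((i == k)%:R * d l j)
    = \sum_(j < s) d l j * x ^+ k * y ^+ j.
  rewrite exchange_big; apply: eq_bigr => j _.
  rewrite (eq_bigr (fun i : 'I_r => (x ^+ i * y ^+ j * d l j) * (i == k)%:R)).
    by rewrite sum_delta; ring.
  by move=> i _; ring.
rewrite h1 h2 /v /=.
rewrite mulrDl mulrA -exprS ec mulrCA -exprS ed mulr_suml mulr_sumr.
by congr (_ + _); apply: eq_bigr => i _; ring.
Qed.

Lemma alg_mul x y : alg_closure_in P x -> alg_closure_in P y ->
  alg_closure_in P (x * y).
Proof.
move=> /alg_basis [r [c [r0 cP ec]]] /alg_basis [s [d [s0 dP ed]]].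
pose v := fun ij : 'I_r * 'I_s => x ^+ ij.1 * y ^+ ij.2.
pose a := fun (ij kl : 'I_r * 'I_s) => c kl.1 ij.1 * d kl.2 ij.2.
apply: (@alg_module F P HP _ v a).
- by move=> ij kl; apply: (PM HP).
- exists (Ordinal r0, Ordinal s0); by rewrite /v /= !expr0 mulr1 oner_neq0.
move=> [k l]; rewrite sum_pair /v /a /=.
rewrite (_ : x * y * (x ^+ k * y ^+ l) = x ^+ k.+1 * y ^+ l.+1); last first.
  by rewrite !exprS; ring.
rewrite ec ed mulr_suml; apply: eq_bigr => i _; rewrite mulr_sumr.
by apply: eq_bigr => j _; ring.
Qed.

Lemma alg_inv x : alg_closure_in P x -> alg_closure_in P x^-1.
Proof.
case: (eqVneq x 0) => [->|x0]; first by rewrite invr0.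
case=> p [p0 pc rp].
set N := (size p).-1.
have eN : size p = N.+1 by rewrite /N prednK // lt0n size_poly_eq0.
exists (\poly_(j < N.+1) p`_(N - j)); split.
- apply/eqP => /(congr1 (fun q : {poly F} => q`_0)).
  rewrite coef_poly subn0 coef0 /N => /eqP.
  by rewrite -lead_coefE lead_coef_eq0 (negbTE p0).
- by move=> i; rewrite coef_poly; case: ifP => _; [apply: pc | apply: (P0 HP)].
apply/rootP; apply: (@mulIf _ (x ^+ N)); first by rewrite expf_neq0.
rewrite mul0r horner_poly mulr_suml.
transitivity p.[x]; last exact/rootP.
rewrite horner_coef eN (reindex_inj rev_ord_inj); apply: eq_bigr => j _.
rewrite /= subSS subKn; last by rewrite -ltnS.
rewrite -mulrA; congr (_ * _).
have hj : (j <= N)%N by rewrite -ltnS.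
rewrite exprVn (_ : x ^+ N = x ^+ (N - j) * x ^+ j); last by rewrite -exprD subnK.
by rewrite mulKf // expf_neq0.
Qed.

Lemma alg_subfield : is_subfield (alg_closure_in P).
Proof.
split.
- exact/alg_base/(P0 HP).
- exact/alg_base/(P1 HP).
- move=> x y hx hy; rewrite -mulN1r; apply: alg_add => //.
  by apply: alg_mul => //; apply/alg_base/(PN HP)/(P1 HP).
- by move=> x y; apply: alg_mul.
- by move=> x hx _; apply: alg_inv.
Qed.

End Alg.


Section MP.
Variables (F : fieldType) (n : nat).
Implicit Types (p q : {mpoly F[n]}) (P Q : F -> Prop).

Lemma mOver_mono P Q p : (forall x, P x -> Q x) -> mOver P p -> mOver Q p.
Proof. by move=> h hp m; apply: h. Qed.

Section WithP.
Variables (P : F -> Prop) (HP : is_subfield P).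

Lemma mOver0 : mOver P (0 : {mpoly F[n]}).
Proof. by move=> m; rewrite mcoeff0; apply: (P0 HP). Qed.
Lemma mOverD p q : mOver P p -> mOver P q -> mOver P (p + q).
Proof. by move=> hp hq m; rewrite mcoeffD; apply: (PD HP). Qed.
Lemma mOverB p q : mOver P p -> mOver P q -> mOver P (p - q).
Proof. by move=> hp hq m; rewrite mcoeffB; apply: (PB HP). Qed.
Lemma mOver_sum (I : Type) (r : seq I) (Qp : pred I) (G : I -> {mpoly F[n]}) :
  (forall i, mOver P (G i)) -> mOver P (\sum_(i <- r | Qp i) G i).
Proof.
move=> h; apply: big_ind; [exact: mOver0 | move=> x y; apply: mOverD | by move=> i _; apply: h].
Qed.
Lemma mOverM p q : mOver P p -> mOver P q -> mOver P (p * q).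
Proof.
move=> hp hq m; rewrite mcoeffM; apply: (Psum HP) => k; exact: (PM HP).
Qed.
Lemma mOverC c : P c -> mOver P (c%:MP : {mpoly F[n]}).
Proof. by move=> hc m; rewrite mcoeffC; apply: (PM HP) => //; apply: (Pnat HP). Qed.
Lemma mOverX m : mOver P ('X_[m] : {mpoly F[n]}).
Proof. by move=> k; rewrite mcoeffX; apply: (Pnat HP). Qed.
Lemma mOverZ c p : P c -> mOver P p -> mOver P (c *: p).
Proof. by move=> hc hp m; rewrite mcoeffZ; apply: (PM HP). Qed.
Lemma mOver_mderiv i p : mOver P p -> mOver P (mderiv i p).
Proof.
move=> hp; rewrite /mderiv; apply: mOver_sum => m; apply: mOverZ; last exact: mOverX.
by apply: (PM HP) => //; apply: (Pnat HP).
Qed.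
Lemma mOver_der (d : n.-tuple {mpoly F[n]}) p :
  (forall i, mOver P (tnth d i)) -> mOver P p -> mOver P (der d p).
Proof.
move=> hd hp; rewrite /der; apply: mOver_sum => i; apply: mOverM => //.
exact: mOver_mderiv.
Qed.
Lemma mOver_iter (d : n.-tuple {mpoly F[n]}) N p :
  (forall i, mOver P (tnth d i)) -> mOver P p -> mOver P (iter N (der d) p).
Proof. by move=> hd hp; elim: N => //= N IH; apply: mOver_der. Qed.
End WithP.

Section Der.
Variable d : n.-tuple {mpoly F[n]}.
Lemma derD p q : der d (p + q) = der d p + der d q.
Proof. by rewrite /der -big_split; apply: eq_bigr => i _; rewrite mderivD mulrDr. Qed.
Lemma der0 : der d 0 = 0.
Proof. by rewrite /der big1 // => i _; rewrite mderiv0 mulr0. Qed.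
Lemma der_sum (I : Type) (r : seq I) (G : I -> {mpoly F[n]}) :
  der d (\sum_(i <- r) G i) = \sum_(i <- r) der d (G i).
Proof. exact: (big_morph _ derD der0). Qed.
Lemma derZ c p : der d (c *: p) = c *: der d p.
Proof.
by rewrite /der scaler_sumr; apply: eq_bigr => i _; rewrite mderivZ scalerAr.
Qed.
Lemma derM p q : der d (p * q) = der d p * q + p * der d q.
Proof.
rewrite /der mulr_suml mulr_sumr -big_split; apply: eq_bigr => i _.
rewrite mderivM mulrDr [tnth d i * (_ * q)]mulrA [tnth d i * (p * _)]mulrCA. by [].
Qed.
Lemma iter_der_lin (I : Type) (r : seq I) (c : I -> F) (G : I -> {mpoly F[n]}) N :
  iter N (der d) (\sum_(i <- r) c i *: G i) = \sum_(i <- r) c i *: iter N (der d) (G i).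
Proof.
elim: N => //= N ->; rewrite der_sum; apply: eq_bigr => i _; exact: derZ.
Qed.
End Der.

Section Ideal.
Variable gens : seq {mpoly F[n]}.

Lemma ideal_fun P p : in_ideal P gens p <->
  exists f : 'I_(size gens) -> {mpoly F[n]},
    (forall i, mOver P (f i)) /\ p = \sum_(i < size gens) f i * gens`_i.
Proof.
split.
- case=> cs [sz hc ->]; exists (fun i => cs`_i); split => // i.
  by apply: hc; apply: mem_nth; rewrite sz.
- case=> f [hf ->]; exists [seq f i | i <- enum 'I_(size gens)]; split.
  + by rewrite size_map size_enum_ord.
  + by move=> c /mapP [i _ ->].
  + apply: eq_bigr => i _; congr (_ * _).
    by rewrite (nth_map i) ?size_enum_ord // nth_ord_enum.
Qed.

Section WithP2.
Variables (P : F -> Prop) (HP : is_subfield P).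

Lemma in_ideal0 : in_ideal P gens 0.
Proof.
apply/ideal_fun; exists (fun _ => 0); split; first by move=> _; apply: mOver0.
by rewrite big1 // => i _; rewrite mul0r.
Qed.
Lemma in_idealD p q : in_ideal P gens p -> in_ideal P gens q -> in_ideal P gens (p + q).
Proof.
move=> /ideal_fun [f [hf ->]] /ideal_fun [g [hg ->]]; apply/ideal_fun.
exists (fun i => f i + g i); split; first by move=> i; apply: mOverD.
by rewrite -big_split; apply: eq_bigr => i _; rewrite mulrDl.
Qed.
Lemma in_ideal_sum (I : Type) (r : seq I) (G : I -> {mpoly F[n]}) :
  (forall i, in_ideal P gens (G i)) -> in_ideal P gens (\sum_(i <- r) G i).
Proof.
move=> h; apply: big_ind; [exact: in_ideal0 | move=> x y; apply: in_idealD | by move=> i _; apply: h].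
Qed.
Lemma in_idealM c p : mOver P c -> in_ideal P gens p -> in_ideal P gens (c * p).
Proof.
move=> hc /ideal_fun [f [hf ->]]; apply/ideal_fun.
exists (fun i => c * f i); split; first by move=> i; apply: mOverM.
by rewrite mulr_sumr; apply: eq_bigr => i _; rewrite mulrA.
Qed.
Lemma in_ideal_gen g : g \in gens -> in_ideal P gens g.
Proof.
move=> hg; apply/ideal_fun.
have hi : (index g gens < size gens)%N by rewrite index_mem.
exists (fun i => ((i : nat) == index g gens)%:R); split.
  by move=> i; rewrite -mpolyC_nat; apply: (mOverC HP); apply: (Pnat HP).
rewrite (bigD1 (Ordinal hi)) //= eqxx mul1r nth_index // big1 ?addr0 // => j hj.
rewrite (_ : ((j : nat) == index g gens) = false) ?mul0r //.
apply/negbTE; apply: contra hj => /eqP ej; apply/eqP/val_inj => /=; exact: ej.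
Qed.

Lemma der_ideal (d : n.-tuple {mpoly F[n]}) p :
  (forall i, mOver P (tnth d i)) ->
  (forall g, g \in gens -> in_ideal P gens (der d g)) ->
  in_ideal P gens p -> in_ideal P gens (der d p).
Proof.
move=> hd hg /ideal_fun [f [hf ->]].
rewrite der_sum; apply: in_ideal_sum => i; rewrite derM; apply: in_idealD.
  by apply/ideal_fun; exists (fun j => if j == i then der d (f i) else 0); split;
  [move=> j; case: ifP => _; [apply: mOver_der | apply: mOver0] |
   rewrite (bigD1 i) //= eqxx big1 ?addr0 // => j /negbTE ->; rewrite mul0r].
apply: in_idealM => //; apply: hg; exact: mem_nth.
Qed.

End WithP2.

Lemma in_ideal_mono P Q p : (forall x, P x -> Q x) -> in_ideal P gens p -> in_ideal Q gens p.
Proof.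
move=> h [cs [sz hc e]]; exists cs; split => // c /hc; exact: mOver_mono.
Qed.

End Ideal.
End MP.


Section Descent.
Variables (F : fieldType) (n : nat).

Lemma expand_mp (q : {mpoly F[n]}) (L : seq 'X_{1..n}) :
  {subset msupp q <= L} -> uniq L ->
  q = \sum_(j < size L) q@_(nth 0%MM L j) *: 'X_[nth 0%MM L j].
Proof.
move=> sub uL.
rewrite -(big_mkord predT (fun j => q@_(nth 0%MM L j) *: 'X_[nth 0%MM L j])).
rewrite -(big_nth 0%MM predT (fun m => q@_m *: 'X_[m])).
apply/mpolyP => m0; rewrite raddf_sum /=.
under eq_bigr do rewrite mcoeffZ mcoeffX.
have [m0L|m0L] := boolP (m0 \in L).
- rewrite (bigD1_seq m0) //= eqxx mulr1 big1 ?addr0 // => m /negbTE.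
  by rewrite eq_sym => ->; rewrite mulr0.
- rewrite big1_seq; last first.
    move=> m /= mL; rewrite (_ : (m == m0) = false) ?mulr0 //.
    by apply/negbTE; apply: contraNneq m0L => <-.
  apply: memN_msupp_eq0; apply: contra m0L; exact: sub.
Qed.

Lemma sum_pairM a b (G : 'I_a * 'I_b -> {mpoly F[n]}) :
  \sum_(ij : 'I_a * 'I_b) G ij = \sum_(i < a) \sum_(j < b) G (i, j).
Proof. by rewrite pair_big /=; apply: eq_big => // -[i j]. Qed.

Lemma sum_pairF a b (G : 'I_a * 'I_b -> F) :
  \sum_(ij : 'I_a * 'I_b) G ij = \sum_(i < a) \sum_(j < b) G (i, j).
Proof. by rewrite pair_big /=; apply: eq_big => // -[i j]. Qed.

Lemma descent (P : F -> Prop) (HP : is_subfield P) (gens : seq {mpoly F[n]})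
  (p : {mpoly F[n]}) :
  (forall g, g \in gens -> mOver P g) -> mOver P p ->
  in_ideal (fun _ => True) gens p -> in_ideal P gens p.
Proof.
move=> hg hp /ideal_fun [f [_ ef]].
set G := size gens in f ef *.
pose Ms := undup (flatten [seq msupp (f i) | i <- enum 'I_G]).
pose Mn := size Ms.
pose prodX (ij : 'I_G * 'I_Mn) := 'X_[nth 0%MM Ms ij.2] * gens`_ij.1.
pose Es := undup (msupp p ++ flatten [seq msupp (prodX ij) | ij <- enum {: 'I_G * 'I_Mn}]).
pose a (ij : 'I_G * 'I_Mn) (e : 'I_(size Es)) := (prodX ij)@_(nth 0%MM Es e).
pose b (e : 'I_(size Es)) := p@_(nth 0%MM Es e).
have manip : forall h : 'I_G * 'I_Mn -> F,
    \sum_(i < G) (\sum_(j < Mn) h (i, j) *: 'X_[nth 0%MM Ms j]) * gens`_i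
    = \sum_ij h ij *: prodX ij.
  move=> h; rewrite sum_pairM; apply: eq_bigr => i _; rewrite mulr_suml.
  by apply: eq_bigr => j _; rewrite -scalerAl.
have coefS : forall (h : 'I_G * 'I_Mn -> F) nu,
    (\sum_ij h ij *: prodX ij)@_nu = \sum_ij h ij * (prodX ij)@_nu.
  by move=> h nu; rewrite raddf_sum; apply: eq_bigr => ij _; apply: mcoeffZ.
pose u0 (ij : 'I_G * 'I_Mn) := (f ij.1)@_(nth 0%MM Ms ij.2).
have pE : p = \sum_ij u0 ij *: prodX ij.
  rewrite -manip ef; apply: eq_bigr => i _; congr (_ * _).
  apply: expand_mp; last exact: undup_uniq.
  move=> m hm; rewrite mem_undup; apply/flattenP; exists (msupp (f i)) => //.
  by apply/mapP; exists i; rewrite ?mem_enum.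
have [u [uP hu]] : exists u : 'I_G * 'I_Mn -> F,
    (forall ij, P (u ij)) /\ forall e, \sum_ij u ij * a ij e = b e.
  apply: (lin_descentT HP).
  - by move=> ij e; apply: (mOverM HP); [apply: (mOverX HP) | apply: hg; apply: mem_nth].
  - by move=> e; apply: hp.
  exists u0 => e; rewrite /b [in RHS]pE coefS; done.
apply/ideal_fun.
exists (fun i => \sum_(j < Mn) u (i, j) *: 'X_[nth 0%MM Ms j]); split.
  move=> i; apply: (mOver_sum HP) => j; apply: (mOverZ HP) => //.
  exact: (mOverX HP).
rewrite manip; apply/mpolyP => nu; rewrite coefS.
have [nuE|nuE] := boolP (nu \in Es).
- have hi : (index nu Es < size Es)%N by rewrite index_mem.
  have := hu (Ordinal hi); rewrite /b /a /= nth_index // => ->; done.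
- rewrite memN_msupp_eq0; last first.
    by apply: contra nuE => h; rewrite mem_undup mem_cat h.
  rewrite big1 // => ij _; rewrite memN_msupp_eq0 ?mulr0 //.
  apply: contra nuE => h; rewrite mem_undup mem_cat; apply/orP; right.
  apply/flattenP; exists (msupp (prodX ij)) => //.
  by apply/mapP; exists ij; rewrite ?mem_enum.
Qed.

End Descent.


Lemma True_subfield (F : fieldType) : is_subfield (fun _ : F => True).
Proof. by split. Qed.

Theorem lemma1p3 (k : closedFieldType) (n m : nat)
  (k0 : k -> Prop)
  (I : seq {mpoly k[n]}) (J : seq {mpoly k[m]})
  (phi : m.-tuple {mpoly k[n]}) (d : n.-tuple {mpoly k[n]}) :
  (* k algebraically closed of characteristic zero *)
  [pchar k] =i pred0 ->
  (* k0 subfield of k, finitely generated over Q *)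
  is_subfield k0 -> fg_subfield k0 ->
  (* the data Y0, T0, f0, D0 are defined over k0 *)
  (forall g, g \in I -> mOver k0 g) ->
  (forall g, g \in J -> mOver k0 g) ->
  (forall j, mOver k0 (tnth phi j)) ->
  (forall i, mOver k0 (tnth d i)) ->
  (* f0 : Y0 -> T0 is a morphism *)
  (forall g, g \in J -> in_ideal k0 I (comp_mpoly phi g)) ->
  (* D0 is a derivation of B0 which is R0-trivial *)
  (forall g, g \in I -> in_ideal k0 I (der d g)) ->
  (forall j, in_ideal k0 I (der d (tnth phi j))) ->
  (* Y0, T0 geometrically integral (integral over the algebraic closure k1) *)
  prime_over (alg_closure_in k0) I -> prime_over (alg_closure_in k0) J ->
  (* Y, T irreducible affine k-varieties *)
  prime_over (fun _ => True) I -> prime_over (fun _ => True) J ->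
  (* f0 and f dominant *)
  dominant_over k0 I J phi -> dominant_over (fun _ => True) I J phi ->
  (* general fibers of f are irreducible and reduced *)
  (exists h : {mpoly k[m]}, ~ in_ideal (fun _ => True) J h /\
     forall a : 'I_m -> k, point_over (fun _ => True) J a -> h.@[a] != 0 ->
       prime_over (fun _ => True) (fiber_gens I phi a)) ->
  (* D is locally nilpotent on every fiber over a closed point of T *)
  (forall a : 'I_m -> k, point_over (fun _ => True) J a ->
     lnd_over (fun _ => True) d (fiber_gens I phi a)) ->
  (* (1) D1 is locally nilpotent on every fiber over a closed point of T1 *)
  (forall a : 'I_m -> k, point_over (alg_closure_in k0) J a ->
     lnd_over (alg_closure_in k0) d (fiber_gens I phi a))
  /\
  (* (2) D1 locally nilpotent iff D locally nilpotent *)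
  (lnd_over (alg_closure_in k0) d I <-> lnd_over (fun _ => True) d I).
Proof.
move=> _ Hk0 _ hI _ hphi hd _ hdI _ _ _ _ _ _ _ _ Hfib.
have Hk1 : is_subfield (alg_closure_in k0) := alg_subfield Hk0.
have k01 : forall x, k0 x -> alg_closure_in k0 x := alg_base Hk0.
have hd1 : forall i, mOver (alg_closure_in k0) (tnth d i).
  by move=> i; apply: mOver_mono k01 (hd i).
have hI1 : forall g, g \in I -> mOver (alg_closure_in k0) g.
  by move=> g /hI; apply: mOver_mono k01.
have HT := True_subfield k.
split.
  move=> a [aP aJ] p hp.
  have [N hN] := Hfib a (conj (fun _ => Logic.I) aJ) p (fun _ => Logic.I).
  exists N; apply: (descent Hk1) hN; last exact: (mOver_iter Hk1).
  move=> g; rewrite mem_cat => /orP [/hI1 // | /mapP [j _ ->]].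
  apply: (mOverB Hk1); first exact: mOver_mono k01 (hphi j).
  exact: (mOverC Hk1).
split; last first.
  move=> H p hp; have [N hN] := H p (fun _ => Logic.I).
  by exists N; apply: (descent Hk1) hN; [exact: hI1 | exact: (mOver_iter Hk1)].
move=> H1 p _.
have hdT : forall i, mOver (fun _ => True) (tnth d i) by [].
have hgT : forall g, g \in I -> in_ideal (fun _ => True) I (der d g).
  by move=> g /hdI; apply: in_ideal_mono.
have mono : forall K N q, in_ideal (fun _ => True) I (iter N (der d) q) ->
    in_ideal (fun _ => True) I (iter (K + N) (der d) q).
  move=> K N q h; rewrite iterD; elim: K => //= K IH.
  exact: (der_ideal HT).
have [N hN] : exists N, forall mm, mm \in msupp p ->
    in_ideal (fun _ => True) I (iter N (der d) 'X_[mm]).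
  elim: (msupp p) => [|mm L [N hN]]; first by exists 0%N.
  have [M hM] := H1 'X_[mm] (mOverX Hk1 mm).
  have hM' := in_ideal_mono (fun _ _ => Logic.I) hM.
  exists (N + M)%N => m'; rewrite inE => /orP [/eqP -> | /hN h].
    exact: mono.
  by rewrite addnC; apply: mono.
exists N.
rewrite [p]mpolyE iter_der_lin big_seq.
apply: big_ind.
- by apply: in_ideal0.
- by move=> x y; apply: in_idealD.
move=> mm hmm; rewrite -mul_mpolyC; apply: in_idealM => //.
exact: hN.
Qed.
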